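(* The groups $A_3$ and $C_3$ act freely (i.e. without fixed points) on $X_\Gamma$.
   Context: Let $\Gamma=\Gamma(2)\cap\Gamma_1(7)\subseteq\mathrm{SL}_2(\mathbb{Z})$, where $\Gamma_1(7)=\{\begin{pmatrix}a&b\\c&d\end{pmatrix}\in\mathrm{SL}_2(\mathbb{Z}): c\equiv0,\ a\equiv d\equiv1 \pmod 7\}$, and let $X_\Gamma=\Gamma\backslash(\mathfrak{H}\cup\mathbb{P}^1(\mathbb{Q}))$ be the compactified modular curve. Let $\Gamma_*(2)$ be the set of $\gamma\in\mathrm{SL}_2(\mathbb{Z})$ with $\gamma\equiv\begin{pmatrix}1&0\\0&1\end{pmatrix},\begin{pmatrix}1&1\\1&0\end{pmatrix}$ or $\begin{pmatrix}0&1\\1&1\end{pmatrix}\pmod 2$ (the unique subgroup containing $\Gamma(2)$ with index $3$), and $\Gamma_*(7)=\{\begin{pmatrix}a&b\\c&d\end{pmatrix}\in\mathrm{SL}_2(\mathbb{Z}): c\equiv0 \pmod 7,\ a,d\equiv 1,2,\text{ or }4\pmod 7\}$. Then $\Gamma$ is normal in $\Gamma_*(2)\cap\Gamma_*(7)$, and the group $(\Gamma_*(2)\cap\Gamma_*(7))/\Gamma\cong C_3\times C_3$ acts on $X_\Gamma$. Define $A_3=(\Gamma_*(2)\cap\Gamma_1(7))/\Gamma$ and $C_3=(\Gamma(2)\cap\Gamma_*(7))/\Gamma$, two subgroups of order $3$. *)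

(* Defs.v *)
From Stdlib Require Import Reals ZArith List.
Open Scope Z_scope.

(** 2x2 integer matrices [[a b];[c d]]. *)
Record mat := Mat { ma : Z; mb : Z; mc : Z; md : Z }.

Definition SL2 (m : mat) : Prop := ma m * md m - mb m * mc m = 1.

Definition congr (n a b : Z) : Prop := a mod n = b mod n.

Definition cond_Gamma2 (m : mat) : Prop :=
  congr 2 (ma m) 1 /\ congr 2 (mb m) 0 /\ congr 2 (mc m) 0 /\ congr 2 (md m) 1.

Definition cond_Gamma_star2 (m : mat) : Prop :=
  cond_Gamma2 m
  \/ (congr 2 (ma m) 1 /\ congr 2 (mb m) 1 /\ congr 2 (mc m) 1 /\ congr 2 (md m) 0)
  \/ (congr 2 (ma m) 0 /\ congr 2 (mb m) 1 /\ congr 2 (mc m) 1 /\ congr 2 (md m) 1).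

Definition cond_Gamma1_7 (m : mat) : Prop :=
  congr 7 (mc m) 0 /\ congr 7 (ma m) 1 /\ congr 7 (md m) 1.

Definition cond_Gamma_star7 (m : mat) : Prop :=
  congr 7 (mc m) 0 /\ In (ma m mod 7) (1 :: 2 :: 4 :: nil)
  /\ In (md m mod 7) (1 :: 2 :: 4 :: nil).

Definition inGamma (m : mat) : Prop := SL2 m /\ cond_Gamma2 m /\ cond_Gamma1_7 m.
(** Gamma_*(2) /\ Gamma_1(7); its quotient by Gamma is A_3. *)
Definition inA3 (m : mat) : Prop := SL2 m /\ cond_Gamma_star2 m /\ cond_Gamma1_7 m.
(** Gamma(2) /\ Gamma_*(7); its quotient by Gamma is C_3. *)
Definition inC3 (m : mat) : Prop := SL2 m /\ cond_Gamma2 m /\ cond_Gamma_star7 m.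

(** Points of H u P^1(Q): [HP x y] is tau = x + i y (needs y > 0);
    [CP p q] is the cusp [p : q] (needs (p,q) <> (0,0)). *)
Inductive pt := HP (x y : R) | CP (p q : Z).

Definition valid_pt (t : pt) : Prop :=
  match t with
  | HP _ y => (0 < y)%R
  | CP p q => ~ (p = 0 /\ q = 0)
  end.

Definition pt_eq (s t : pt) : Prop :=
  match s, t with
  | HP x y, HP x' y' => x = x' /\ y = y'
  | CP p q, CP p' q' => p * q' = p' * q
  | _, _ => False
  end.

(** Moebius action tau |-> (a tau + b)/(c tau + d), written in real coordinates. *)
Definition act (g : mat) (t : pt) : pt :=
  match t with
  | HP x y =>
      let a := IZR (ma g) in let b := IZR (mb g) in
      let c := IZR (mc g) in let d := IZR (md g) in
      let den := ((c * x + d) ^ 2 + (c * y) ^ 2)%R in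
      HP ((a * c * (x ^ 2 + y ^ 2) + (a * d + b * c) * x + b * d) / den)%R
         ((a * d - b * c) * y / den)%R
  | CP p q => CP (ma g * p + mb g * q) (mc g * p + md g * q)
  end.

(** The group G/Gamma (G a group containing Gamma as a normal subgroup) acts
    freely on X_Gamma = Gamma \ (H u P^1(Q)): no non-identity coset g Gamma
    fixes any point Gamma tau, i.e. g tau is never Gamma-equivalent to tau. *)
Definition acts_freely_on_XGamma (G : mat -> Prop) : Prop :=
  forall g, G g -> ~ inGamma g ->
  forall t, valid_pt t ->
  ~ (exists gam, inGamma gam /\ pt_eq (act g t) (act gam t)).

(* Main.v *)
Require Import Defs.
From Stdlib Require Import Reals ZArith List Lia Lra Psatz.
Open Scope Z_scope.
Lemma cusp_trace (h11 h12 h21 h22 p q : Z) :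
  h11*h22 - h12*h21 = 1 -> ~ (p = 0 /\ q = 0) ->
  (h11*p + h12*q)*q = (h21*p + h22*q)*p ->
  (h11+h22)*(h11+h22) = 4.
Proof.
  intros Hdet Hnz E.
  set (g := Z.gcd p q).
  assert (Hg0 : g <> 0) by (unfold g; rewrite Z.gcd_eq_0; tauto).
  destruct (Z.gcd_divide_l p q) as [p0 Hp].
  destruct (Z.gcd_divide_r p q) as [q0 Hq].
  fold g in Hp, Hq.
  assert (Hc : Z.gcd p0 q0 = 1).
  { rewrite <- (Z.gcd_div_gcd p q g Hg0 eq_refl).
    rewrite Hp, Hq, !Z.div_mul by exact Hg0. reflexivity. }
  destruct (Z.gcd_bezout _ _ _ Hc) as [u [w Hb]].
  assert (E0 : (h11*p0 + h12*q0)*q0 = (h21*p0 + h22*q0)*p0).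
  { rewrite Hp, Hq in E.
    assert (g*g*((h11*p0 + h12*q0)*q0 - (h21*p0 + h22*q0)*p0) = 0) by nia.
    apply Z.mul_eq_0 in H. destruct H as [H|H]; [nia|lia]. }
  set (P0 := h11*p0 + h12*q0) in *.
  set (Q0 := h21*p0 + h22*q0) in *.
  set (l := u*P0 + w*Q0).
  assert (L1 : l*p0 = P0).
  { assert (l*p0 - P0 = w*(Q0*p0 - P0*q0) + P0*(u*p0+w*q0 - 1)) by (unfold l; ring). rewrite E0, Hb in H. lia. }
  assert (L2 : l*q0 = Q0).
  { assert (l*q0 - Q0 = u*(P0*q0 - Q0*p0) + Q0*(u*p0+w*q0 - 1)) by (unfold l; ring). rewrite E0, Hb in H. lia. }
  assert (A1 : l*(h22*p0 - h12*q0) = p0).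
  { assert (l*(h22*p0 - h12*q0) = h22*(l*p0) - h12*(l*q0)) by ring.
    rewrite H, L1, L2. unfold P0, Q0.
    assert (h22 * (h11 * p0 + h12 * q0) - h12 * (h21 * p0 + h22 * q0) = (h11*h22 - h12*h21)*p0) by ring.
    rewrite H0, Hdet. ring. }
  assert (A2 : l*(h11*q0 - h21*p0) = q0).
  { assert (l*(h11*q0 - h21*p0) = h11*(l*q0) - h21*(l*p0)) by ring.
    rewrite H, L1, L2. unfold P0, Q0.
    assert (h11 * (h21 * p0 + h22 * q0) - h21 * (h11 * p0 + h12 * q0) = (h11*h22 - h12*h21)*q0) by ring.
    rewrite H0, Hdet. ring. }
  assert (Hl : l = 1 \/ l = -1).
  { apply (Z.eq_mul_1 l (u*(h22*p0 - h12*q0) + w*(h11*q0 - h21*p0))).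
    transitivity (u*(l*(h22*p0 - h12*q0)) + w*(l*(h11*q0 - h21*p0))); [ring|]. rewrite A1, A2. lia. }
  assert (Hnz0 : ~ (p0 = 0 /\ q0 = 0)) by (intros [-> ->]; rewrite Z.gcd_0_l in Hc; lia).
  assert (D1 : ((h11-l)*(h22-l) - h12*h21)*p0 = 0).
  { assert (((h11-l)*(h22-l) - h12*h21)*p0 = (h22-l)*(P0 - l*p0) - h12*(Q0 - l*q0)) by (unfold P0, Q0; ring).
    rewrite H, L1, L2. ring. }
  assert (D2 : ((h11-l)*(h22-l) - h12*h21)*q0 = 0).
  { assert (((h11-l)*(h22-l) - h12*h21)*q0 = (h11-l)*(Q0 - l*q0) - h21*(P0 - l*p0)) by (unfold P0, Q0; ring).
    rewrite H, L1, L2. ring. }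
  assert (D : (h11-l)*(h22-l) - h12*h21 = 0).
  { destruct (Z.eq_dec p0 0) as [e|ne].
    - assert (q0 <> 0) by tauto. apply Z.mul_eq_0 in D2. tauto.
    - apply Z.mul_eq_0 in D1. tauto. }
  destruct Hl as [-> | ->]; nia.
Qed.

Lemma den_pos (a b c d : Z) (x y : R) : (0 < y)%R -> a*d - b*c = 1 ->
  (0 < (IZR c * x + IZR d) ^ 2 + (IZR c * y) ^ 2)%R.
Proof.
  intros Hy Hdet.
  destruct (Z.eq_dec c 0) as [e|ne].
  - subst c. assert (d <> 0) by (intro; subst; lia).
    apply not_0_IZR in H. simpl. nra.
  - apply not_0_IZR in ne. assert (0 < (IZR c * y)^2)%R.
    { assert (IZR c * y <> 0)%R by (intro H; apply Rmult_integral in H; lra).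
      pose proof (Rlt_0_sqr _ H). unfold Rsqr in *. nra. }
    assert (0 <= (IZR c * x + IZR d) ^ 2)%R by apply pow2_ge_0. lra.
Qed.

Lemma comp_id (a b c d : R) (x y : R) :
  let den := ((c * x + d) ^ 2 + (c * y) ^ 2)%R in
  den <> 0%R ->
  let X := ((a * c * (x ^ 2 + y ^ 2) + (a * d + b * c) * x + b * d) / den)%R in
  let Y := ((a * d - b * c) * y / den)%R in
  (a*x + b = X*(c*x+d) - Y*(c*y))%R /\ (a*y = X*(c*y) + Y*(c*x+d))%R.
Proof.
  intros den Hd X Y. unfold X, Y, den in *. split; field; auto.
Qed.

Lemma hp_quad (a b c d a' b' c' d' : Z) (x y : R) : (0 < y)%R ->
  a*d - b*c = 1 -> a'*d' - b'*c' = 1 ->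
  pt_eq (act (Mat a b c d) (HP x y)) (act (Mat a' b' c' d') (HP x y)) ->
  ((a*d' + b*c' - a'*d - b'*c)*(a*d' + b*c' - a'*d - b'*c)
     - 4*(a*c' - a'*c)*(b*d' - b'*d) < 0)
  \/ (a*c' - a'*c = 0 /\ a*d' + b*c' - a'*d - b'*c = 0 /\ b*d' - b'*d = 0).
Proof.
  intros Hy H1 H2 Heq.
  pose proof (den_pos a b c d x y Hy H1) as P1.
  pose proof (den_pos a' b' c' d' x y Hy H2) as P2.
  unfold pt_eq, act in Heq; cbv zeta in Heq; cbn [ma mb mc md] in Heq. destruct Heq as [HX HY].
  destruct (comp_id (IZR a) (IZR b) (IZR c) (IZR d) x y) as [I1 I2]; [simpl in *; lra|].
  destruct (comp_id (IZR a') (IZR b') (IZR c') (IZR d') x y) as [I3 I4]; [simpl in *; lra|].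
  cbv zeta in I1, I2, I3, I4.
  set (X := ((IZR a * IZR c * (x ^ 2 + y ^ 2) + (IZR a * IZR d + IZR b * IZR c) * x + IZR b * IZR d) /
            ((IZR c * x + IZR d) ^ 2 + (IZR c * y) ^ 2))%R) in *.
  set (Y := ((IZR a * IZR d - IZR b * IZR c) * y / ((IZR c * x + IZR d) ^ 2 + (IZR c * y) ^ 2))%R) in *.
  set (X' := ((IZR a' * IZR c' * (x ^ 2 + y ^ 2) + (IZR a' * IZR d' + IZR b' * IZR c') * x + IZR b' * IZR d') /
            ((IZR c' * x + IZR d') ^ 2 + (IZR c' * y) ^ 2))%R) in *.
  set (Y' := ((IZR a' * IZR d' - IZR b' * IZR c') * y / ((IZR c' * x + IZR d') ^ 2 + (IZR c' * y) ^ 2))%R) in *.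
  assert (Re : ((IZR a * x + IZR b) * (IZR c' * x + IZR d') - (IZR a * y) * (IZR c' * y)
            - (IZR a' * x + IZR b') * (IZR c * x + IZR d) + (IZR a' * y) * (IZR c * y) = 0)%R).
  { rewrite I1, I2, I3, I4, HX, HY. ring. }
  assert (Im : ((IZR a * x + IZR b) * (IZR c' * y) + (IZR a * y) * (IZR c' * x + IZR d')
            - (IZR a' * x + IZR b') * (IZR c * y) - (IZR a' * y) * (IZR c * x + IZR d) = 0)%R).
  { rewrite I1, I2, I3, I4, HX, HY. ring. }
  clearbody X Y X' Y'.
  set (A := a*c' - a'*c). set (B := a*d' + b*c' - a'*d - b'*c). set (C := b*d' - b'*d).
  assert (ReA : (IZR A * (x^2 - y^2) + IZR B * x + IZR C = 0)%R).
  { unfold A, B, C. rewrite ?minus_IZR, ?plus_IZR, ?mult_IZR. rewrite <- Re. ring. }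
  assert (ImA : ((2 * IZR A * x + IZR B) * y = 0)%R).
  { unfold A, B, C. rewrite ?minus_IZR, ?plus_IZR, ?mult_IZR. rewrite <- Im. ring. }
  clearbody A B C. clear Re Im I1 I2 I3 I4.
  assert (ImB : (2 * IZR A * x + IZR B = 0)%R).
  { apply Rmult_integral in ImA. destruct ImA; [assumption|lra]. }
  destruct (Z.eq_dec A 0) as [e|ne].
  - subst A. right. assert (IZR B = 0)%R by (simpl in ImB; lra).
    apply eq_IZR in H. subst B. split; [reflexivity|split; [reflexivity|]].
    apply eq_IZR. simpl in ReA. lra.
  - left. apply lt_IZR. rewrite ?minus_IZR, ?mult_IZR.
    apply not_0_IZR in ne.
    assert (E : (IZR B * IZR B - IZR 4 * IZR A * IZR C = - 4 * (IZR A * y)^2)%R).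
    { replace (IZR B) with (- 2 * IZR A * x)%R by lra. simpl IZR.
      replace (IZR C) with (- IZR A * (x^2 - y^2) - IZR B * x)%R by lra.
      replace (IZR B) with (- 2 * IZR A * x)%R by lra. ring. }
    rewrite E. assert (IZR A * y <> 0)%R by (intro Hz; apply Rmult_integral in Hz; lra).
    pose proof (Rlt_0_sqr _ H). unfold Rsqr in *. simpl. lra.
Qed.

Lemma cm (n x r : Z) : 0 < n -> 0 <= r < n -> congr n x r -> exists k, x = n*k + r.
Proof.
  intros Hn Hr H. unfold congr in H. rewrite (Z.mod_small r n Hr) in H.
  exists (x / n). rewrite <- H. apply Z.div_mod. lia.
Qed.

Lemma cm124 (x : Z) : In (x mod 7) (1 :: 2 :: 4 :: nil) ->
  exists k r, x = 7*k + r /\ (r = 1 \/ r = 2 \/ r = 4).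
Proof.
  intros H. exists (x/7), (x mod 7). split. apply Z.div_mod; lia.
  simpl in H. intuition.
Qed.

Lemma int_A3 (a b c d a' b' c' d' : Z) :
  inA3 (Mat a b c d) -> inGamma (Mat a' b' c' d') ->
  -2 <= (a*d' - b'*c) + (a'*d - c'*b) <= 2 -> inGamma (Mat a b c d).
Proof.
  intros [HS [H2 H7]] [HS' [G2 G7]] HT.
  unfold cond_Gamma1_7, cond_Gamma2 in *; simpl in *.
  destruct H7 as [c7 [a7 d7]].
  destruct G7 as [c'7 [a'7 d'7]].
  destruct G2 as [a'2 [b'2 [c'2 d'2]]].
  apply cm in c7; try lia. apply cm in a7; try lia. apply cm in d7; try lia.
  apply cm in c'7; try lia. apply cm in a'7; try lia. apply cm in d'7; try lia.
  apply cm in a'2; try lia. apply cm in b'2; try lia. apply cm in c'2; try lia. apply cm in d'2; try lia.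
  destruct c7 as [m Hc], a7 as [s Ha], d7 as [t Hd], c'7 as [m' Hc'], a'7 as [k Ha'], d'7 as [l Hd'].
  destruct a'2 as [k2 Ha'2], b'2 as [n2 Hb'2], c'2 as [m2 Hc'2], d'2 as [l2 Hd'2].
  assert (Z7 : exists z, (a*d' - b'*c) + (a'*d - c'*b) = a + d + 7*z).
  { exists (a*l - b'*m + k*d - m'*b). rewrite Ha', Hd', Hc, Hc'. ring. }
  assert (Z2 : exists z, (a*d' - b'*c) + (a'*d - c'*b) = a + d + 2*z).
  { exists (a*l2 - n2*c + k2*d - m2*b). rewrite Ha'2, Hd'2, Hb'2, Hc'2. ring. }
  destruct Z7 as [z Hz], Z2 as [z2 Hz2].
  split; [exact HS|].
  unfold cond_Gamma_star2, cond_Gamma2 in H2; simpl in H2.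
  unfold cond_Gamma1_7; simpl.
  destruct H2 as [H2 | [[a2 [_ [_ d2]]] | [a2 [_ [_ d2]]]]].
  - split; [exact H2|]. unfold congr. rewrite Hc, Ha, Hd.
    rewrite !(Z.add_comm (7*_)), !(Z.mul_comm 7), !Z_mod_plus_full. auto.
  - apply cm in a2; try lia. apply cm in d2; try lia.
    destruct a2 as [u Hu], d2 as [v Hv]. exfalso. lia.
  - apply cm in a2; try lia. apply cm in d2; try lia.
    destruct a2 as [u Hu], d2 as [v Hv]. exfalso. lia.
Qed.

Lemma int_C3 (a b c d a' b' c' d' : Z) :
  inC3 (Mat a b c d) -> inGamma (Mat a' b' c' d') ->
  -2 <= (a*d' - b'*c) + (a'*d - c'*b) <= 2 -> inGamma (Mat a b c d).
Proof.
  intros [HS [H2 H7]] [HS' [G2 G7]] HT.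
  unfold cond_Gamma_star7, cond_Gamma1_7, cond_Gamma2, SL2 in *; simpl in *.
  destruct H7 as [c7 [a7 d7]].
  destruct G7 as [c'7 [a'7 d'7]].
  destruct G2 as [a'2 [b'2 [c'2 d'2]]].
  destruct H2 as [a2 [b2 [c2 d2]]].
  apply cm in c7; try lia. apply cm124 in a7. apply cm124 in d7.
  apply cm in c'7; try lia. apply cm in a'7; try lia. apply cm in d'7; try lia.
  apply cm in a'2; try lia. apply cm in b'2; try lia. apply cm in c'2; try lia. apply cm in d'2; try lia.
  pose proof a2 as a2'. pose proof d2 as d2'.
  apply cm in a2'; try lia. apply cm in d2'; try lia.
  destruct c7 as [m Hc], a7 as [s [ra [Ha Hra]]], d7 as [t [rd [Hd Hrd]]], c'7 as [m' Hc'], a'7 as [k Ha'], d'7 as [l Hd'].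
  destruct a'2 as [k2 Ha'2], b'2 as [n2 Hb'2], c'2 as [m2 Hc'2], d'2 as [l2 Hd'2].
  destruct a2' as [u Hu], d2' as [v Hv].
  assert (Z7 : exists z, (a*d' - b'*c) + (a'*d - c'*b) = a + d + 7*z).
  { exists (a*l - b'*m + k*d - m'*b). rewrite Ha', Hd', Hc, Hc'. ring. }
  assert (Z2 : exists z, (a*d' - b'*c) + (a'*d - c'*b) = a + d + 2*z).
  { exists (a*l2 - n2*c + k2*d - m2*b). rewrite Ha'2, Hd'2, Hb'2, Hc'2. ring. }
  assert (W : exists w, a*d - b*c = 7*w + ra*rd).
  { exists (7*s*t + s*rd + ra*t - b*m). rewrite Ha, Hd, Hc. ring. }
  destruct Z7 as [z Hz], Z2 as [z2 Hz2], W as [w Hw].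
  assert (ra = 1 /\ rd = 1) as [-> ->].
  { destruct Hra as [-> | [-> | ->]], Hrd as [-> | [-> | ->]]; lia. }
  split; [exact HS|]. split; [exact (conj a2 (conj b2 (conj c2 d2)))|].
  unfold cond_Gamma1_7, congr; simpl.
  split; [|split].
  - rewrite Hc, Z.add_0_r, (Z.mul_comm 7 m), Z_mod_mult. reflexivity.
  - rewrite Ha, Z.add_comm, Z.mul_comm, Z_mod_plus_full. reflexivity.
  - rewrite Hd, Z.add_comm, Z.mul_comm, Z_mod_plus_full. reflexivity.
Qed.

Lemma free_gen (G : mat -> Prop)
  (HS : forall m, G m -> SL2 m)
  (Hint : forall a b c d a' b' c' d', G (Mat a b c d) -> inGamma (Mat a' b' c' d') ->
     -2 <= (a*d' - b'*c) + (a'*d - c'*b) <= 2 -> inGamma (Mat a b c d)) :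
  acts_freely_on_XGamma G.
Proof.
  intros g Gg nG t vt [gam [Hgam Heq]].
  destruct g as [a b c d], gam as [a' b' c' d'].
  apply nG. apply (Hint a b c d a' b' c' d' Gg Hgam).
  pose proof (HS _ Gg) as D1. pose proof (proj1 Hgam) as D2.
  unfold SL2 in D1, D2; simpl in D1, D2.
  assert (Hdh : (a*d' - b'*c)*(a'*d - c'*b) - (d'*b - b'*d)*(a'*c - c'*a) = 1).
  { transitivity ((a'*d' - b'*c')*(a*d - b*c)); [ring|]. rewrite D1, D2. ring. }
  assert (TT : ((a*d' - b'*c) + (a'*d - c'*b)) * ((a*d' - b'*c) + (a'*d - c'*b)) <= 4).
  2:{ nia. }
  destruct t as [x y | p q].
  - simpl in vt.
    destruct (hp_quad a b c d a' b' c' d' x y vt D1 D2 Heq) as [Hn | [A0 [B0 C0]]].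
    + assert (E : (a*d' + b*c' - a'*d - b'*c)*(a*d' + b*c' - a'*d - b'*c)
          - 4*(a*c' - a'*c)*(b*d' - b'*d) =
          ((a*d' - b'*c) + (a'*d - c'*b)) * ((a*d' - b'*c) + (a'*d - c'*b))
          - 4*((a'*d' - b'*c')*(a*d - b*c))) by ring.
      rewrite D1, D2 in E. lia.
    + assert (H12 : d'*b - b'*d = 0) by lia.
      assert (H21 : a'*c - c'*a = 0) by lia.
      rewrite H12, H21 in Hdh.
      assert (Hm : (a*d' - b'*c)*(a'*d - c'*b) = 1) by lia.
      apply Z.eq_mul_1 in Hm. nia.
  - simpl in vt, Heq.
    pose proof (cusp_trace (a*d' - b'*c) (d'*b - b'*d) (a'*c - c'*a) (a'*d - c'*b) p q Hdh vt) as CT.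
    assert (E : (a'*d' - b'*c') * (((a * d' - b' * c) * p + (d' * b - b' * d) * q) * q -
                ((a' * c - c' * a) * p + (a' * d - c' * b) * q) * p)
              = ((a'*d' - b'*c')) * ((a * p + b * q) * (c' * p + d' * q) - (a' * p + b' * q) * (c * p + d * q))) by ring.
    rewrite Heq, D2 in E. lia.
Qed.

Theorem mainTheorem6 :
  acts_freely_on_XGamma inA3 /\ acts_freely_on_XGamma inC3.
Proof.
  split; apply free_gen.
  - intros m H; exact (proj1 H).
  - exact int_A3.
  - intros m H; exact (proj1 H).
  - exact int_C3.
Qed.
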